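(* Let $t=1$, let $r_{\max}$ be the maximum requirement of a family, and let $\rho$ be the least common multiple of $\{1,\dots,r_{\max}\}$. If $F'\subseteq F$ is a set of families with $\sum_{f_i\in F'}\boldsymbol{r}_i> r_{\max}(\rho-1)$, then $F'$ contains a homogeneous $\rho$-block.
   Context: There is a single service, so each family $f_i\in F$ has a requirement $\boldsymbol{r}_i\in\mathbb{N}$, and $r_{\max}=\max_{f_i\in F}\boldsymbol{r}_i$. A set $F''\subseteq F$ of families is a homogeneous $\rho$-block if all families in $F''$ have the same requirement and their total requirement equals exactly $\rho$. *)

(* Defs.v *)
From mathcomp Require Import all_boot.

(* Single service (t = 1): a set of families is modelled as a finite type
   [F], each family f having a requirement [r f : nat]. *)

Definition rmax (F : finType) (r : F -> nat) : nat := \max_(f : F) r f.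

Definition lcm_upto (n : nat) : nat := \big[lcmn/1%N]_(1 <= k < n.+1) k.

Definition homogeneous_block (F : finType) (r : F -> nat) (rho : nat)
    (B : {set F}) : Prop :=
  (exists c, forall f, f \in B -> r f = c) /\ \sum_(f in B) r f = rho.

(* Main.v *)
Require Import Defs.
From mathcomp Require Import all_boot.
From mathcomp Require Import zify.

Lemma dvd_lcm_upto n c : 0 < c -> c <= n -> c %| lcm_upto n.
Proof.
rewrite /lcm_upto; elim: n => [|n IH] c0 cn; first by case: c c0 cn.
rewrite big_nat_recr //=.
case: (leqP c n) => hc.
  by apply: dvdn_trans (dvdn_lcml _ _); apply: IH.
have -> : c = n.+1 by apply/eqP; rewrite eqn_leq cn hc.
exact: dvdn_lcmr.
Qed.

Theorem mainTheorem7 (F : finType) (r : F -> nat) (F' : {set F}) :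
  rmax F r * (lcm_upto (rmax F r) - 1) < \sum_(f in F') r f ->
  exists B : {set F}, B \subset F' /\ homogeneous_block F r (lcm_upto (rmax F r)) B.
Proof.
set M := rmax F r; set rho := lcm_upto M => Hsum.
have rM : forall f, r f <= M by move=> f; rewrite /M /rmax; apply: (leq_bigmax f).
pose S (c : nat) := [set f in F' | r f == c].
have Hdec : \sum_(f in F') r f = \sum_(c < M.+1) c * #|S c|.
  transitivity (\sum_(f in F') \sum_(c < M.+1) (if r f == c then nat_of_ord c else 0%N)).
    apply: eq_bigr => f _.
    rewrite (bigD1 (Ordinal (rM f : r f < M.+1))) //= eqxx big1 ?addn0 //.
    by move=> i; rewrite -val_eqE /= eq_sym => /negbTE ->.
  rewrite exchange_big; apply: eq_bigr => c _.
  rewrite -big_mkcondr.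
  rewrite (eq_bigl (fun f => f \in S c)); last by move=> f; rewrite inE.
  by rewrite sum_nat_const mulnC.
case: (boolP [exists c : 'I_M.+1, (0 < c) && (rho <= c * #|S c|)]).
  case/existsP => c /andP[c0 hc].
  have cd : c %| rho by apply: dvd_lcm_upto => //; rewrite -ltnS.
  have hk : rho %/ c <= #|S c|.
    by apply: leq_trans (leq_div2r c hc) _; rewrite mulKn.
  case/card_geqP: hk => s [us ss sS].
  exists [set x in s]; split.
    by apply/subsetP => x; rewrite inE => /sS; rewrite inE => /andP[].
  split.
    by exists (nat_of_ord c) => f; rewrite inE => /sS; rewrite inE => /andP[_ /eqP].
  rewrite (eq_bigr (fun _ => nat_of_ord c)).
    by rewrite sum_nat_const cardsE (card_uniqP us) ss divnK.
  by move=> f; rewrite inE => /sS; rewrite inE => /andP[_ /eqP].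
move/existsPn => H.
exfalso; move: Hsum; apply/negP; rewrite -leqNgt Hdec big_ord_recl mul0n add0n.
apply: leq_trans (_ : \sum_(i < M) (rho - 1) <= _); last by rewrite sum_nat_const card_ord mulnC.
apply: leq_sum => i _.
move: (H (lift ord0 i)); rewrite lift0 /= -ltnNge.
move=> h; lia.
Qed.
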